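(* Let $\mathcal P$ be a Poisson $n$-Lie algebra over an arbitrary field $\mathbb F$. For any $a\in\mathcal P$ and $\lambda\in\mathbb F$, the generalized eigenspace $$P_{a,\lambda}=\{x\in\mathcal P\mid (P_a-\lambda)^k(x)=0\text{ for some }k\in\mathbb N\}$$ is an ideal of $\mathcal P$, where $P_a(z)=a\cdot z$.
   Context: A Poisson $n$-Lie algebra is a commutative associative algebra $(\mathcal P,\cdot)$ with an $n$-linear skew-symmetric bracket satisfying the fundamental identity $[x_1,\dots,x_{n-1},[y_1,\dots,y_n]]=\sum_{i=1}^n[y_1,\dots,[x_1,\dots,x_{n-1},y_i],\dots,y_n]$ and the Leibniz rule $[y\cdot z,x_2,\dots,x_n]=y\cdot[z,x_2,\dots,x_n]+z\cdot[y,x_2,\dots,x_n]$. An ideal is a subspace $\mathcal I$ with $\mathcal P\cdot\mathcal I\subseteq\mathcal I$ and $[\mathcal I,\mathcal P,\dots,\mathcal P]\subseteq\mathcal I$ (linear spans). *)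

(* Defs.v *)
From HB Require Import structures.
From mathcomp Require Import all_boot all_order all_fingroup all_algebra.
Set Implicit Arguments. Unset Strict Implicit. Unset Printing Implicit Defensive.
Import GRing.Theory.
Local Open Scope ring_scope.

Section PoissonNLie.
Variables (F : fieldType) (V : lmodType F) (n : nat).

Definition upd (x : {ffun 'I_n -> V}) (i : 'I_n) (v : V) : {ffun 'I_n -> V} :=
  [ffun j => if j == i then v else x j].

Definition setlast (x : {ffun 'I_n -> V}) (v : V) : {ffun 'I_n -> V} :=
  [ffun j : 'I_n => if val j == n.-1 then v else x j].

(* (P, mul, br) is a Poisson n-Lie algebra over F:
   - mul is a bilinear commutative associative product (not necessarily unital);
   - br is n-linear, skew-symmetric, satisfies the fundamental identity
     and the Leibniz rule in its first argument. *)
Definition is_poisson_nLie (mul : V -> V -> V) (br : {ffun 'I_n -> V} -> V) : Prop :=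
  (forall (c : F) (x y z : V), mul (c *: x + y) z = c *: mul x z + mul y z) /\
  (forall x y : V, mul x y = mul y x) /\
  (forall x y z : V, mul x (mul y z) = mul (mul x y) z) /\
  [/\
      (forall (x : {ffun 'I_n -> V}) (i : 'I_n) (c : F) (u v : V),
          br (upd x i (c *: u + v)) = c *: br (upd x i u) + br (upd x i v)),
      (forall (x : {ffun 'I_n -> V}) (s : 'S_n),
          br [ffun i => x (s i)] = ((-1) ^+ odd_perm s) *: br x),
      (forall x y : {ffun 'I_n -> V},
          br (setlast x (br y)) =
          \sum_(i < n) br (upd y i (br (setlast x (y i)))) ) &
      (forall (x : {ffun 'I_n -> V}) (i : 'I_n) (y z : V), val i = 0%N ->
          br (upd x i (mul y z)) = mul y (br (upd x i z)) + mul z (br (upd x i y)))].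

Definition is_ideal (mul : V -> V -> V) (br : {ffun 'I_n -> V} -> V) (I : V -> Prop) : Prop :=
  [/\ I 0,
      (forall (c : F) (x y : V), I x -> I y -> I (c *: x + y)),
      (forall p x : V, I x -> I (mul p x)) &
      (forall (x : {ffun 'I_n -> V}) (i : 'I_n), val i = 0%N -> I (x i) -> I (br x))].

Definition gen_eigenspace (mul : V -> V -> V) (a : V) (lambda : F) (x : V) : Prop :=
  exists k : nat, iter k (fun z => mul a z - lambda *: z) x = 0.

End PoissonNLie.

(* Main.v *)
Require Import Defs.
From mathcomp Require Import all_boot all_order all_fingroup all_algebra.
Local Open Scope ring_scope.
Import GRing.Theory.

Theorem proposition5p21 (F : fieldType) (V : lmodType F) (n : nat)
  (mul : V -> V -> V) (br : {ffun 'I_n -> V} -> V) :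
  (2 <= n)%N -> is_poisson_nLie mul br ->
  forall (a : V) (lambda : F), is_ideal mul br (gen_eigenspace mul a lambda).
Proof.
move=> _ [mulL [mulC [mulA [brL _ _ brLeib]]]] a lambda.
have mul0l : forall z, mul 0 z = 0.
  move=> z; have := mulL (-1) 0 0 z.
  by rewrite scaler0 addr0 scaleN1r addNr.
have mulR : forall (c : F) p x y, mul p (c *: x + y) = c *: mul p x + mul p y.
  by move=> c p x y; rewrite mulC mulL (mulC x) (mulC y).
have mul0r : forall z, mul z 0 = 0 by move=> z; rewrite mulC.
have mulRZ : forall (c : F) p x, mul p (c *: x) = c *: mul p x.
  by move=> c p x; have := mulR c p x 0; rewrite !addr0 mul0r addr0.
have mulRD : forall p x y, mul p (x + y) = mul p x + mul p y.
  by move=> p x y; have := mulR 1 p x y; rewrite !scale1r.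
have mulRN : forall p x, mul p (- x) = - mul p x.
  by move=> p x; rewrite -scaleN1r mulRZ scaleN1r.
set f := fun z => mul a z - lambda *: z.
have fL : forall (c : F) x y, f (c *: x + y) = c *: f x + f y.
  move=> c x y; rewrite /f /= mulR scalerDr scalerA mulrC -scalerA scalerBr.
  by rewrite opprD addrACA.
have f0 : f 0 = 0 by rewrite /f mul0r scaler0 subr0.
have itL : forall k (c : F) x y, iter k f (c *: x + y) = c *: iter k f x + iter k f y.
  by elim=> [//|k IH] c x y /=; rewrite IH fL.
have it0 : forall k, iter k f 0 = 0 by elim=> [//|k IH] /=; rewrite IH f0.
have itD : forall m k x, iter k f x = 0 -> iter (m + k) f x = 0.
  by move=> m k x H; rewrite iterD H it0.
have fM : forall p x, f (mul p x) = mul p (f x).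
  move=> p x; rewrite /f /= mulRD mulRN mulRZ mulA (mulC a p) -mulA //.
have fB : forall x y, f (x - y) = f x - f y.
  by move=> x y; rewrite addrC -scaleN1r fL scaleN1r addrC.
have fZ : forall (c : F) x, f (c *: x) = c *: f x.
  by move=> c x; have := fL c x 0; rewrite !addr0 f0 addr0.
have itM : forall k p x, iter k f (mul p x) = mul p (iter k f x).
  by elim=> [//|k IH] p x /=; rewrite IH fM.
split.
- by exists 0%N.
- move=> c x y [k1 H1] [k2 H2]; exists (k1 + k2)%N.
  rewrite itL (itD k1 k2 y H2) [X in iter X f x]addnC (itD k2 k1 x H1).
  by rewrite scaler0 addr0.
- by move=> p x [k H]; exists k; rewrite itM H mul0r.
move=> x i i0 [k H].
pose D z := br (upd x i z).
pose b := D a.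
have D0 : D 0 = 0.
  by rewrite /D; have := brL x i (-1) 0 0; rewrite scaler0 addr0 scaleN1r addNr.
have fD : forall w, f (D w) = D (f w) - mul b w.
  move=> w; have -> : f w = (-lambda) *: w + mul a w by rewrite /f /= addrC scaleNr.
  rewrite /D brL brLeib // (mulC w) /f /=.
  by rewrite addrA addrK scaleNr addrC.
have Key : forall z m, iter m.+1 f (D z) = D (iter m.+1 f z) - m.+1%:R *: mul b (iter m f z).
  move=> z; elim=> [|m IH]; first by rewrite /= fD scale1r.
  change (iter m.+2 f (D z)) with (f (iter m.+1 f (D z))).
  rewrite IH fB fZ fM fD.
  change (f (iter m f z)) with (iter m.+1 f z).
  rewrite -addrA -opprD -{1}(scale1r (mul b _)) -scalerDl -mulrS //.
have updK : upd x i (x i) = x.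
  by apply/ffunP => j; rewrite ffunE; case: eqP => // ->.
exists k.+1; rewrite -updK -/(D (x i)) Key.
change (iter k.+1 f (x i)) with (f (iter k f (x i))).
by rewrite H f0 mul0r scaler0 D0 subr0.
Qed.
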